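(* Consider the two-armed Gaussian bandit with two candidate models described in the context, under disagreement $\phi(\nu)=1$, $\phi(\gamma)=2$, with $\Delta_1<0<\Delta_2$, and let $\mu$ be the unique invariant probability measure on $(0,1)$ of the posterior process $\{\pi_t\}$. Then for every $\varepsilon\in(0,1/2)$, $\mu([\varepsilon,1-\varepsilon])>0$. In particular, in the stationary regime both actions are chosen with strictly positive long-run frequency, i.e. $\int\pi\,\mu(d\pi)\in(0,1)$.
   Context: Actions are $\mathcal A=\{1,2\}$. True environment: conditional on the past and on $A_t=i$, $R_t\sim\mathcal N(g(i),1)$. Two candidate models $\nu=(\nu_1,\nu_2)$, $\gamma=(\gamma_1,\gamma_2)\in\mathbb R^2$; under model $\theta$ the agent believes $R_t\mid A_t=i\sim\mathcal N(\theta_i,1)$ with density $f_\theta(r\mid i)$; $\phi(\theta)=\arg\max_i\theta_i$ (assumed unique). Thompson Sampling: prior $\pi_0\in(0,1)$ on $\nu$; at each date draw $\theta_t=\nu$ w.p. $\pi_t$, else $\gamma$; play $A_t=\phi(\theta_t)$ (so action 1 is played with probability $\pi_t$); observe $R_t$; Bayes update $\pi_{t+1}=\pi_t f_\nu(R_t\mid A_t)/(\pi_t f_\nu(R_t\mid A_t)+(1-\pi_t)f_\gamma(R_t\mid A_t))$. $\Delta_i:=\mathbb E_{R\sim\mathcal N(g(i),1)}[\log f_\nu(R\mid i)-\log f_\gamma(R\mid i)]$. In this regime the posterior process is a positive Harris recurrent Markov chain on $(0,1)$ with a unique invariant probability measure $\mu$. *)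

(* Defs.v *)
From HB Require Import structures.
From mathcomp Require Import all_boot all_order all_algebra.
From mathcomp Require Import all_classical all_reals all_analysis.
Set Implicit Arguments. Unset Strict Implicit. Unset Printing Implicit Defensive.
Import Order.TTheory GRing.Theory Num.Theory.
Local Open Scope classical_set_scope.
Local Open Scope ring_scope.

(* Actions A = {1,2} are encoded as booleans: [true] = action 1,
   [false] = action 2.  A model theta = (theta_1, theta_2) and the true
   mean-reward vector g = (g(1), g(2)) are pairs of reals. *)
Definition arm {R : realType} (th : R * R) (i : bool) : R :=
  if i then th.1 else th.2.

Definition fdens {R : realType} (th : R * R) (i : bool) (r : R) : R :=
  normal_pdf (arm th i) 1 r.

(* phi(theta) = argmax_i theta_i (assumed unique): true iff action 1. *)
Definition phi {R : realType} (th : R * R) : bool := th.2 < th.1.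

Definition bayes_update {R : realType} (nu gam : R * R) (p : R) (i : bool)
    (r : R) : R :=
  p * fdens nu i r / (p * fdens nu i r + (1 - p) * fdens gam i r).

(* Transition kernel of the posterior process {pi_t} under Thompson
   sampling: with probability p the sample is nu and action phi nu is
   played, otherwise gam is sampled and action phi gam is played; the
   reward is drawn from the true law N(g(A_t), 1). *)
Definition TS_kernel {R : realType} (g nu gam : R * R) (p : R) (A : set R)
    : \bar R :=
  (p%:E * normal_prob (arm g (phi nu)) 1 (bayes_update nu gam p (phi nu) @^-1` A)
   + (1 - p)%:E *
       normal_prob (arm g (phi gam)) 1 (bayes_update nu gam p (phi gam) @^-1` A))%E.

Definition TS_invariant {R : realType} (g nu gam : R * R)
    (mu : probability R R) : Prop :=
  mu `]0%R, 1%R[%classic = 1%E /\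
  forall A : set R, measurable A ->
    mu A = (\int[mu]_(p in `]0%R, 1%R[%classic) TS_kernel g nu gam p A)%E.

Definition Delta {R : realType} (g nu gam : R * R) (i : bool) : \bar R :=
  (\int[normal_prob (arm g i) 1]_r (ln (fdens nu i r) - ln (fdens gam i r))%:E)%E.

(* Main.v *)
Require Import Defs.
From HB Require Import structures.
From mathcomp Require Import all_boot all_order all_algebra.
From mathcomp Require Import all_classical all_reals all_analysis.
From mathcomp Require Import ring lra.
Import Order.TTheory GRing.Theory Num.Theory.
Local Open Scope classical_set_scope.
Local Open Scope ring_scope.

Lemma bayes_form (R : realType) (nu gam : R * R) (p r : R) : 0 < p -> p < 1 ->
  bayes_update nu gam p true r =
  p * expR ((nu.1 - gam.1) * (r - (nu.1 + gam.1) / 2)) /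
  (p * expR ((nu.1 - gam.1) * (r - (nu.1 + gam.1) / 2)) + (1 - p)).
Proof.
move=> p0 p1.
rewrite /bayes_update /fdens /= !normal_pdfE ?oner_neq0 //=.
set E := expR _.
have eA : normal_fun nu.1 1 r = normal_fun gam.1 1 r * E.
  rewrite /normal_fun /E -expRD; congr expR.
  by rewrite expr1n; field.
have P0 : 0 < normal_peak (1:R) by apply: normal_peak_gt0; rewrite oner_neq0.
have F0 : 0 < normal_fun gam.1 (1:R) r by apply: expR_gt0.
have E0 : 0 < E by apply: expR_gt0.
rewrite eA.
have D0 : p * E + (1 - p) != 0.
  by apply: lt0r_neq0; rewrite addr_gt0 // ?mulr_gt0 // subr_gt0.
field.
apply/andP; split=> //.
rewrite (_ : _ + _ = normal_peak 1 * normal_fun gam.1 1 r * (p * E + (1 - p))); last by ring.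
by rewrite !mulf_neq0 // lt0r_neq0.
Qed.

Lemma alg_bounds (R : realType) (p eps E : R) : 0 < p -> p < 1 -> 0 < eps -> eps < 1/2 ->
  0 < E ->
  ((1 - p) / p) / ((1 - eps) / eps) <= E -> E <= ((1 - p) / p) * ((1 - eps) / eps) ->
  eps <= p * E / (p * E + (1 - p)) <= 1 - eps.
Proof.
move=> p0 p1 e0 e1 E0 h1 h2.
have q0 : 0 < 1 - eps by lra.
have r0 : 0 < 1 - p by lra.
have D0 : 0 < p * E + (1 - p) by rewrite addr_gt0 // mulr_gt0.
have {h1} h1 : eps * (1 - p) <= (1 - eps) * p * E.
  move: h1; rewrite (_ : _ / _ = (eps * (1 - p)) / ((1 - eps) * p)); last first.
    by field; repeat (apply/andP; split); apply: lt0r_neq0; rewrite ?mulr_gt0.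
  rewrite ler_pdivrMr ?mulr_gt0 //; lra.
have {h2} h2 : eps * p * E <= (1 - eps) * (1 - p).
  move: h2; rewrite (_ : _ * _ = ((1 - eps) * (1 - p)) / (eps * p)); last first.
    by field; repeat (apply/andP; split); apply: lt0r_neq0; rewrite ?mulr_gt0.
  rewrite ler_pdivlMr ?mulr_gt0 //; lra.
apply/andP; split.
  rewrite ler_pdivlMr //; nra.
rewrite ler_pdivrMr //; nra.
Qed.

Lemma exp_bounds (R : realType) (a b p eps r : R) : a != b -> 0 < p -> p < 1 ->
  0 < eps -> eps < 1/2 ->
  `|r - ((a + b) / 2 + ln ((1 - p) / p) / (a - b))| <= ln ((1 - eps) / eps) / `|a - b| ->
  ((1 - p) / p) / ((1 - eps) / eps) <= expR ((a - b) * (r - (a + b) / 2)) <=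
  ((1 - p) / p) * ((1 - eps) / eps).
Proof.
move=> ab p0 p1 e0 e1 hr.
have d0 : a - b != 0 by rewrite subr_eq0.
have ad0 : 0 < `|a - b| by rewrite normr_gt0.
have k0 : 0 < (1 - p) / p by rewrite divr_gt0 // subr_gt0.
have q0 : 0 < (1 - eps) / eps by rewrite divr_gt0 // subr_gt0; lra.
set k := (1 - p) / p in hr k0 *; set q := (1 - eps) / eps in hr q0 *.
set x := (a + b) / 2 + _ in hr.
have -> : (a - b) * (r - (a + b) / 2) = ln k + (a - b) * (r - x).
  by rewrite /x; field.
have hy : `|(a - b) * (r - x)| <= ln q.
  by rewrite normrM mulrC -ler_pdivlMr.
move: hy; rewrite ler_norml => /andP [hy1 hy2].
rewrite expRD lnK ?posrE //.
apply/andP; split.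
  rewrite ler_pM2l //.
  by rewrite -[q in q^-1](lnK (x:=q)) ?posrE // -expRN ler_expR.
rewrite ler_pM2l //.
by rewrite -[q in _ <= q](lnK (x:=q)) ?posrE // ler_expR.
Qed.

Lemma int_lb d (T : measurableType d) (R : realType) (mu : {measure set T -> \bar R})
  (D A : set T) (mA : measurable A) (AD : A `<=` D) (f : T -> \bar R) (c : R) (c0 : 0 <= c) :
  (forall x, D x -> (0 <= f x)%E) -> (forall x, A x -> (c%:E <= f x)%E) ->
  (c%:E * mu A <= \int[mu]_(x in D) f x)%E.
Proof.
move=> f0 fc; rewrite ge0_integralE//.
apply: ereal_sup_ubound => /=.
exists (scale_nnsfun (indic_nnsfun R mA) c0).
  move=> x /=; rewrite /patch measurable_realfun.mindicE.
  case: ifPn => [/set_mem Dx|Dx]; case: (boolP (x \in A)) => [/[dup] xA /set_mem Ax|Ax].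
  - by rewrite mulr1 fc.
  - by rewrite mulr0 f0.
  - by exfalso; move/negP: Dx; apply; apply/mem_set/AD.
  - by rewrite mulr0.
have := sintegralrM mu c (indic_nnsfun R mA).
rewrite /= => ->.
by rewrite measurable_realfun.mindicE -(sintegral_indic mu A); congr (_ * sintegral _ _)%E; apply/funext => x; rewrite indicE.
Qed.

Lemma np_lb (R : realType) (nu gam : R * R) (m eps al : R) : nu.1 != gam.1 ->
  0 < eps -> eps < 1/2 -> 0 < al -> al <= 1/2 ->
  exists c : R, 0 < c /\ forall p, al <= p -> p <= 1 - al ->
    (c%:E <= normal_prob m 1 (bayes_update nu gam p true @^-1` `[eps, (1 - eps)%R]%classic))%E.
Proof.
move=> ab e0 e1 a0 a1.
set a := nu.1; set b := gam.1.
have ad0 : 0 < `|a - b| by rewrite normr_gt0 subr_eq0.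
set de := ln ((1 - eps) / eps) / `|a - b|.
have de0 : 0 < de.
  rewrite /de divr_gt0 // ln_gt0 // ltr_pdivlMr //; lra.
set X := `|(a + b) / 2 - m| + (- ln al) / `|a - b|.
have X0 : 0 <= X.
  rewrite /X addr_ge0 // divr_ge0 // oppr_ge0 ln_le0 //; lra.
set c1 := normal_peak (1:R) * expR (- (X + de) ^+ 2 / 2).
have c10 : 0 < c1 by rewrite mulr_gt0 ?expR_gt0 // normal_peak_gt0 // oner_neq0.
exists (c1 * (de *+ 2)); split; first by rewrite mulr_gt0 // mulrn_wgt0.
move=> p hp1 hp2.
have p0 : 0 < p by lra.
have p1 : p < 1 by lra.
set x := (a + b) / 2 + ln ((1 - p) / p) / (a - b).
have k0 : 0 < (1 - p) / p by rewrite divr_gt0 // subr_gt0.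
have hk : `|ln ((1 - p) / p)| <= - ln al.
  rewrite ler_norml; apply/andP; split.
    rewrite opprK ler_ln ?posrE //.
    rewrite ler_pdivlMr //; nra.
  rewrite -lnV ?posrE // ler_ln ?posrE ?invr_gt0 //.
  rewrite ler_pdivrMr //; apply: (@le_trans _ _ 1); first lra.
  by rewrite ler_pdivlMl // mulr1.
have hxm : `|x - m| <= X.
  rewrite /x /X (_ : _ - m = ((a + b) / 2 - m) + ln ((1 - p) / p) / (a - b)); last by ring.
  rewrite (le_trans (ler_normD _ _)) // lerD2l normrM normfV ler_pM2r ?invr_gt0 //.
have mA : measurable `[x - de, x + de]%classic by exact: measurable_itv.
have AD : `[x - de, x + de]%classic `<=` bayes_update nu gam p true @^-1` `[eps, (1 - eps)%R]%classic.
  move=> r /=; rewrite in_itv /= => hr.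
  have hr' : `|r - x| <= de by rewrite ler_distl.
  rewrite bayes_form // in_itv /=.
  apply: alg_bounds => //; first exact: expR_gt0.
  - by case/andP: (@exp_bounds R a b p eps r ab p0 p1 e0 e1 hr').
  - by case/andP: (@exp_bounds R a b p eps r ab p0 p1 e0 e1 hr').
have := @int_lb _ _ _ lebesgue_measure _ _ mA AD (fun r => (normal_pdf m 1 r)%:E) c1 (ltW c10).
move=> H.
have lamA : lebesgue_measure `[x - de, x + de]%classic = (de *+ 2)%:E.
  rewrite lebesgue_measure_itv /= lte_fin ifT; last lra.
  rewrite -EFinD; congr EFin; rewrite mulr2n; ring.
rewrite EFinM -lamA; apply: H.
  by move=> r _; rewrite lee_fin normal_pdf_ge0.
move=> r /=; rewrite in_itv /= => hr.
have hr' : `|r - x| <= de by rewrite ler_distl.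
have hrm : `|r - m| <= X + de.
  rewrite (_ : r - m = (r - x) + (x - m)); last by ring.
  rewrite (le_trans (ler_normD _ _)) //; lra.
move: hrm; rewrite ler_norml => /andP [h1 h2].
rewrite lee_fin normal_pdfE ?oner_neq0 //= /c1 ler_pM2l ?normal_peak_gt0 ?oner_neq0 // /normal_fun ler_expR expr1n.
have : (r - m) ^+ 2 <= (X + de) ^+ 2 by nra.
lra.
Qed.
Lemma exists_al (R : realType) (mu : probability R R) :
  mu `]0%R, 1%R[%classic = 1%E ->
  exists al : R, [/\ 0 < al, al <= 1/2 & (0 < mu `[al, (1 - al)%R]%classic)%E].
Proof.
move=> h.
have [//|hne] := pselect (exists al : R, [/\ 0 < al, al <= 1/2 & (0 < mu `[al, (1 - al)%R]%classic)%E]).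
exfalso.
pose F (n : nat) : set R := `[(n.+2%:R)^-1, (1 - (n.+2%:R)^-1)%R]%classic.
have Fn : forall n, mu.-negligible (F n).
  move=> n; exists (F n); split => //; first exact: measurable_itv.
  have n0 : 0 < (n.+2%:R : R)^-1 by rewrite invr_gt0 ltr0n.
  have n1 : (n.+2%:R : R)^-1 <= 1/2.
    by rewrite mul1r lef_pV2 ?posrE ?ltr0n // ler_nat.
  apply/eqP; rewrite eq_le measure_ge0 andbT leNgt; apply/negP => hp.
  by apply: hne; exists (n.+2%:R^-1).
have [B [mB B0 UB]] := negligible_bigcup Fn.
have sub : `]0%R, 1%R[%classic `<=` B.
  move=> p /=; rewrite in_itv /= => /andP [p0 p1].
  apply: UB.
  set y := p * (1 - p).
  have y0 : 0 < y by rewrite mulr_gt0 // subr_gt0.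
  exists (Num.truncn y^-1) => //.
  have ht := truncnS_gt y^-1.
  set N := (Num.truncn y^-1).
  have hN : (N.+2%:R : R)^-1 < y.
    rewrite -[y]invrK ltf_pV2 ?posrE ?invr_gt0 ?ltr0n //.
    by rewrite (lt_le_trans ht) // ler_nat.
  rewrite /F /= in_itv /=; apply/andP; split.
    apply: ltW; apply: (lt_le_trans hN); rewrite /y; nra.
  rewrite lerBrDl -lerBrDr; apply: ltW; apply: (lt_le_trans hN); rewrite /y; nra.
have H : (mu `]0%R, 1%R[%classic <= mu B)%E.
  exact: (le_measure mu (mem_set (measurable_itv `]0%R, 1%R[)) (mem_set mB) sub).
by move: H; rewrite h B0 lee_fin ler10.
Qed.

Lemma ereal_aux (R : realType) (x y : \bar R) : (0 < x)%E -> (0 < y)%E -> (x + y = 1)%E -> (x < 1)%E.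
Proof.
case: x => [r| |] //; case: y => [s| |] //.
- rewrite !lte_fin -EFinD => h1 h2 [] h; lra.
Qed.

Theorem corollary2 (R : realType) (g nu gam : R * R) (mu : probability R R) :
  (* disagreement: phi(nu) = 1, phi(gam) = 2 *)
  nu.2 < nu.1 -> gam.1 < gam.2 ->
  (* Delta_1 < 0 < Delta_2 *)
  (Delta g nu gam true < 0)%E -> (0 < Delta g nu gam false)%E ->
  (* mu is the unique invariant probability measure on (0,1) *)
  TS_invariant g nu gam mu ->
  (forall mu' : probability R R, TS_invariant g nu gam mu' ->
     forall A : set R, measurable A -> mu' A = mu A) ->
  (forall eps : R, 0 < eps -> eps < 1 / 2 -> (0 < mu `[eps, (1 - eps)%R]%classic)%E) /\
  (0 < \int[mu]_(p in `]0%R, 1%R[%classic) p%:E)%E /\ (\int[mu]_(p in `]0%R, 1%R[%classic) p%:E < 1)%E.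
Proof.
move=> hnu hgam hD1 _ [hmu1 hinv] _.
have ab : nu.1 != gam.1.
  apply/negP => /eqP E.
  move: hD1; rewrite /Delta /fdens /= E.
  under eq_integral do rewrite subrr.
  by rewrite integral0 ltxx.
have phinu : phi nu = true by [].
have key : forall eps : R, 0 < eps -> eps < 1 / 2 -> (0 < mu `[eps, (1 - eps)%R]%classic)%E.
  move=> eps e0 e1.
  have [al [a0 a1 mal]] := @exists_al R mu hmu1.
  have [c [c0 hc]] := @np_lb R nu gam (arm g true) eps al ab e0 e1 a0 a1.
  rewrite (hinv _ (measurable_itv _)).
  have pos : (0 < (al * c)%:E * mu `[al, (1 - al)%R]%classic)%E.
    by rewrite mule_gt0 // lte_fin mulr_gt0.
  apply: (lt_le_trans pos).
  apply: int_lb.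
  - exact: measurable_itv.
  - move=> p /=; rewrite !in_itv /= => /andP [h1 h2]; apply/andP; split; lra.
  - by rewrite mulr_ge0 // ltW.
  - move=> p /=; rewrite in_itv /= => /andP [h1 h2].
    rewrite /TS_kernel adde_ge0 // mule_ge0 // ?measure_ge0 // lee_fin ?subr_ge0 ltW //.
  - move=> p /=; rewrite in_itv /= => /andP [h1 h2].
    rewrite /TS_kernel phinu.
    apply: le_trans (leeDl _ _); last by rewrite mule_ge0 // ?measure_ge0 // lee_fin subr_ge0; lra.
    rewrite EFinM; apply: lee_pmul; rewrite ?lee_fin.
    + exact: ltW.
    + exact: ltW.
    + exact: h1.
    + exact: hc.
split=> //.
have e4 : (0:R) < 1/4 by lra.
have e4' : (1/4:R) < 1/2 by lra.
have m4 := key _ e4 e4'.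
set q4 := (1/4 : R) in e4 e4' m4.
have mD : measurable (`]0%R, 1%R[%classic : set R) by exact: measurable_itv.
have sub4 : `[q4, (1 - 1/4)%R]%classic `<=` `]0%R, 1%R[%classic.
  move=> p /=; rewrite !in_itv /= => /andP [h1 h2]; apply/andP; split; lra.
have pos : (0 < q4%:E * mu `[q4, (1 - 1/4)%R]%classic)%E.
  by rewrite mule_gt0 // lte_fin.
have I1 : (0 < \int[mu]_(p in `]0%R, 1%R[%classic) p%:E)%E.
  apply: (lt_le_trans pos); apply: int_lb => //; first by rewrite ltW.
  - by move=> p /=; rewrite in_itv /= => /andP [h1 h2]; rewrite lee_fin ltW.
  - by move=> p /=; rewrite in_itv /= => /andP [h1 h2]; rewrite lee_fin.
have I2 : (0 < \int[mu]_(p in `]0%R, 1%R[%classic) (1 - p)%:E)%E.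
  apply: (lt_le_trans pos); apply: int_lb => //; first by rewrite ltW.
  - by move=> p /=; rewrite in_itv /= => /andP [h1 h2]; rewrite lee_fin subr_ge0 ltW.
  - by move=> p /=; rewrite /q4 in_itv /= => /andP [h1 h2]; rewrite lee_fin; lra.
have S : (\int[mu]_(p in `]0%R, 1%R[%classic) p%:E + \int[mu]_(p in `]0%R, 1%R[%classic) (1 - p)%:E = 1)%E.
  rewrite -ge0_integralD //.
  - under eq_integral do rewrite -EFinD subrKC.
    by rewrite integral_cst // mul1e; exact: hmu1.
  - by move=> p /=; rewrite in_itv /= => /andP [h1 h2]; rewrite lee_fin ltW.
  - by move=> p /=; rewrite in_itv /= => /andP [h1 h2]; rewrite lee_fin subr_ge0 ltW.
  - apply: (measurable_realfun.measurable_EFinP (`]0%R,1%R[%classic : set R) (fun x : R => 1 - x)).2; exact: measurable_realfun.measurable_funB.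
split=> //.
exact: (@ereal_aux R _ _ I1 I2 S).
Qed.
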